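(* Let $(\varPhi,\overline{y})$ be a right normalized skew ruled surface in $\mathbb{E}^3$ with support function $q=\frac{f(u)+g(u)v}{w}$, neither $f$ nor $g$ the zero function. Then the following are equivalent: (a) $\overline{y}$ is a right normalization of the first type, i.e. the relative image $\varPhi^*=(U,\overline{y})$ degenerates into a curve; (b) $(\varPhi,\overline{y})$ is relatively minimal; (c) $g=\int\frac{\kappa f}{\delta}\,\mathrm{d}u+c$ for some $c\in\mathbb{R}$.
   Context: $\varPhi$ is a ruled $C^r$-surface ($r\ge3$) with nonvanishing Gaussian curvature, in standard parameters $\overline{x}(u,v)=\overline{s}(u)+v\,\overline{e}(u)$, $(u,v)\in U=I\times\mathbb{R}$, $|\overline{e}|=|\overline{e}'|=1$, $\langle\overline{s}',\overline{e}'\rangle=0$. Frame $\overline{n}=\overline{e}'$, $\overline{z}=\overline{e}\times\overline{n}$, $\overline{n}'=-\overline{e}+\kappa\overline{z}$, $\overline{z}'=-\kappa\overline{n}$. Invariants: $\delta=(\overline{s}',\overline{e},\overline{e}')\neq0$, $\kappa=(\overline{e},\overline{e}',\overline{e}'')$, $\lambda=\cot\sphericalangle(\overline{e},\overline{s}')$, $\overline{s}'=\delta\lambda\overline{e}+\delta\overline{z}$. $w=\sqrt{\delta^2+v^2}$, $\overline{\xi}=(\delta\overline{n}-v\overline{z})/w$. A relative normalization $\overline{y}$ is determined by its support function $q=\langle\overline{\xi},\overline{y}\rangle\neq0$; the right normalization with $q=(f+gv)/w$ ($f,g$ functions of $u$) is $\overline{y}=\frac{(\kappa f-\delta g')v+\delta'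 f-\delta f'-\delta^2\kappa g}{\delta^2}\overline{e}+\frac{f}{\delta}\overline{n}-g\overline{z}$. The relative shape operator is defined by $\overline{y}_{/i}=-B_i^j\overline{x}_{/j}$, the relative mean curvature is $H=\frac12(B_1^1+B_2^2)$, and $(\varPhi,\overline{y})$ is relatively minimal if $H\equiv0$. $\int\cdots\mathrm{d}u$ denotes an antiderivative. *)

(* Defs.v *)
From Stdlib Require Import Reals.
From Coquelicot Require Import Coquelicot.
Open Scope R_scope.

Definition vec3 := (R * R * R)%type.
Definition mkv (a b c : R) : vec3 := (a, b, c).
Definition vx (p : vec3) : R := fst (fst p).
Definition vy (p : vec3) : R := snd (fst p).
Definition vz (p : vec3) : R := snd p.
Definition vzero : vec3 := mkv 0 0 0.
Definition vadd (p q : vec3) : vec3 := mkv (vx p + vx q) (vy p + vy q) (vz p + vz q).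
Definition vscal (k : R) (p : vec3) : vec3 := mkv (k * vx p) (k * vy p) (k * vz p).
Definition vopp (p : vec3) : vec3 := vscal (-1) p.
Definition dot (p q : vec3) : R := vx p * vx q + vy p * vy q + vz p * vz q.
Definition cross (p q : vec3) : vec3 :=
  mkv (vy p * vz q - vz p * vy q) (vz p * vx q - vx p * vz q) (vx p * vy q - vy p * vx q).
Definition det3 (a b c : vec3) : R := dot a (cross b c).

Definition vderiv (c : R -> vec3) (u : R) : vec3 :=
  mkv (Derive (fun t => vx (c t)) u) (Derive (fun t => vy (c t)) u)
      (Derive (fun t => vz (c t)) u).

Definition pu (F : R -> R -> vec3) (u v : R) : vec3 := vderiv (fun t => F t v) u.
Definition pv (F : R -> R -> vec3) (u v : R) : vec3 := vderiv (fun t => F u t) v.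

Definition in_I (a b : Rbar) (u : R) : Prop := Rbar_lt a u /\ Rbar_lt u b.

Definition Ck_at (k : nat) (h : R -> R) (u : R) : Prop :=
  (forall m, (m <= k)%nat -> ex_derive_n h m u) /\ continuous (Derive_n h k) u.
Definition Ck_vec (k : nat) (c : R -> vec3) (u : R) : Prop :=
  Ck_at k (fun t => vx (c t)) u /\ Ck_at k (fun t => vy (c t)) u /\
  Ck_at k (fun t => vz (c t)) u.

Definition nvec (e : R -> vec3) (u : R) : vec3 := vderiv e u.
Definition zvec (e : R -> vec3) (u : R) : vec3 := cross (e u) (nvec e u).
Definition delta (s e : R -> vec3) (u : R) : R := det3 (vderiv s u) (e u) (vderiv e u).
Definition kappa (e : R -> vec3) (u : R) : R := det3 (e u) (vderiv e u) (vderiv (vderiv e) u).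
Definition surf (s e : R -> vec3) (u v : R) : vec3 := vadd (s u) (vscal v (e u)).

(** The right normalization with support function q = (f + g v)/w. *)
Definition rightnorm (s e : R -> vec3) (f g : R -> R) (u v : R) : vec3 :=
  let d := delta s e u in
  let k := kappa e u in
  let d' := Derive (delta s e) u in
  vadd (vscal (((k * f u - d * Derive g u) * v + d' * f u - d * Derive f u
                - d ^ 2 * k * g u) / d ^ 2) (e u))
       (vadd (vscal (f u / d) (nvec e u)) (vscal (- g u) (zvec e u))).

(** Domain of the relatively normalized surface: points of U = I x R where the
    support function q = (f + g v)/w does not vanish. *)
Definition in_dom (a b : Rbar) (f g : R -> R) (u v : R) : Prop :=
  in_I a b u /\ f u + g u * v <> 0.

Definition shape_op (x y : R -> R -> vec3) (u v B11 B12 B21 B22 : R) : Prop :=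
  pu y u v = vopp (vadd (vscal B11 (pu x u v)) (vscal B12 (pv x u v))) /\
  pv y u v = vopp (vadd (vscal B21 (pu x u v)) (vscal B22 (pv x u v))).

Definition relatively_minimal (a b : Rbar) (s e : R -> vec3) (f g : R -> R) : Prop :=
  forall u v, in_dom a b f g u v ->
    exists B11 B12 B21 B22,
      shape_op (surf s e) (rightnorm s e f g) u v B11 B12 B21 B22 /\
      (B11 + B22) / 2 = 0.

(** Right normalization of the first type: the relative image (U, y) degenerates
    into a curve, i.e. y has rank < 2 everywhere (y_u x y_v = 0). *)
Definition first_type (a b : Rbar) (s e : R -> vec3) (f g : R -> R) : Prop :=
  forall u v, in_dom a b f g u v ->
    cross (pu (rightnorm s e f g) u v) (pv (rightnorm s e f g) u v) = vzero.

(* Main.v *)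
Require Import Defs.
From Stdlib Require Import Reals Lra Lia.
From Coquelicot Require Import Coquelicot.
Open Scope R_scope.

Lemma isd_eq (f : R -> R) (x l l' : R) : is_derive f x l -> l = l' -> is_derive f x l'.
Proof. intros H ->; exact H. Qed.
Lemma isd_plus (f g : R -> R) x a b : is_derive f x a -> is_derive g x b -> is_derive (fun t => f t + g t) x (a + b).
Proof. intros; apply (is_derive_plus f g x a b); auto. Qed.
Lemma isd_minus (f g : R -> R) x a b : is_derive f x a -> is_derive g x b -> is_derive (fun t => f t - g t) x (a - b).
Proof. intros; apply (is_derive_minus f g x a b); auto. Qed.
Lemma isd_mult (f g : R -> R) x a b : is_derive f x a -> is_derive g x b -> is_derive (fun t => f t * g t) x (a * g x + f x * b).
Proof. intros; apply (is_derive_mult f g x a b); auto. intros; apply Rmult_comm. Qed.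

Definition vis_derive (c : R -> vec3) (u : R) (L : vec3) : Prop :=
  is_derive (fun t => vx (c t)) u (vx L) /\ is_derive (fun t => vy (c t)) u (vy L) /\
  is_derive (fun t => vz (c t)) u (vz L).
Definition vex (c : R -> vec3) (u : R) : Prop :=
  ex_derive (fun t => vx (c t)) u /\ ex_derive (fun t => vy (c t)) u /\
  ex_derive (fun t => vz (c t)) u.

Lemma vec_eq p q : vx p = vx q -> vy p = vy q -> vz p = vz q -> p = q.
Proof. destruct p as [[p1 p2] p3], q as [[q1 q2] q3]; unfold vx, vy, vz; simpl; intros; subst; reflexivity. Qed.

Lemma vderiv_eq c u L : vis_derive c u L -> vderiv c u = L.
Proof. intros [H1 [H2 H3]]. apply vec_eq; apply is_derive_unique; assumption. Qed.

Lemma vex_vis c u : vex c u -> vis_derive c u (vderiv c u).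
Proof. intros [H1 [H2 H3]]; split; [|split]; apply Derive_correct; assumption. Qed.

Lemma vis_vex c u L : vis_derive c u L -> vex c u.
Proof. intros [H1 [H2 H3]]; split; [|split]; eexists; eassumption. Qed.

Lemma vis_add c d u c' d' : vis_derive c u c' -> vis_derive d u d' ->
  vis_derive (fun t => vadd (c t) (d t)) u (vadd c' d').
Proof.
  intros [H1 [H2 H3]] [K1 [K2 K3]]; split; [|split];
  [exact (isd_plus _ _ _ _ _ H1 K1) | exact (isd_plus _ _ _ _ _ H2 K2) | exact (isd_plus _ _ _ _ _ H3 K3)].
Qed.

Lemma vis_scal (k : R -> R) c u k' c' : is_derive k u k' -> vis_derive c u c' ->
  vis_derive (fun t => vscal (k t) (c t)) u (vadd (vscal k' (c u)) (vscal (k u) c')).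
Proof.
  intros Hk [H1 [H2 H3]]; split; [|split];
  [exact (isd_mult _ _ _ _ _ Hk H1) | exact (isd_mult _ _ _ _ _ Hk H2) | exact (isd_mult _ _ _ _ _ Hk H3)].
Qed.

Lemma vis_const (p : vec3) u : vis_derive (fun _ => p) u vzero.
Proof. split; [|split]; apply (is_derive_const (V := R_NormedModule)). Qed.

Lemma vis_cross c d u c' d' : vis_derive c u c' -> vis_derive d u d' ->
  vis_derive (fun t => cross (c t) (d t)) u (vadd (cross c' (d u)) (cross (c u) d')).
Proof.
  intros [H1 [H2 H3]] [K1 [K2 K3]]; split; [|split];
  (eapply isd_eq; [apply isd_minus; apply isd_mult; eassumption|]);
  unfold vadd, cross, mkv, vx, vy, vz; simpl; ring.
Qed.

Lemma isd_dot c d u c' d' : vis_derive c u c' -> vis_derive d u d' ->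
  is_derive (fun t => dot (c t) (d t)) u (dot c' (d u) + dot (c u) d').
Proof.
  intros [H1 [H2 H3]] [K1 [K2 K3]].
  eapply isd_eq; [apply isd_plus; [apply isd_plus|]; apply isd_mult; eassumption|].
  unfold dot; ring.
Qed.

Lemma exd_dot c d u : vex c u -> vex d u -> ex_derive (fun t => dot (c t) (d t)) u.
Proof. intros Hc Hd. eexists. apply isd_dot; apply vex_vis; assumption. Qed.
Lemma vex_cross c d u : vex c u -> vex d u -> vex (fun t => cross (c t) (d t)) u.
Proof. intros Hc Hd. eapply vis_vex. apply vis_cross; apply vex_vis; assumption. Qed.
Definition regular (a b : Rbar) (s e : R -> vec3) (f g : R -> R) : Prop :=
  forall t, in_I a b t ->
  vex s t /\ vex (vderiv s) t /\ vex (vderiv (vderiv s)) t /\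
  vex e t /\ vex (vderiv e) t /\ vex (vderiv (vderiv e)) t /\
  ex_derive f t /\ ex_derive (Derive f) t /\ ex_derive g t /\ ex_derive (Derive g) t /\
  dot (e t) (e t) = 1 /\ dot (nvec e t) (nvec e t) = 1 /\ delta s e t <> 0.

Lemma ck3 (r : nat) (h : R -> R) t : (3 <= r)%nat -> Ck_at r h t ->
  ex_derive h t /\ ex_derive (Derive h) t /\ ex_derive (Derive (Derive h)) t.
Proof.
  intros Hr [H _]. split; [|split].
  - exact (H 1%nat ltac:(lia)).
  - exact (H 2%nat ltac:(lia)).
  - exact (H 3%nat ltac:(lia)).
Qed.

Lemma ck2 (h : R -> R) t : Ck_at 2 h t -> ex_derive h t /\ ex_derive (Derive h) t.
Proof.
  intros [H _]. split.
  - exact (H 1%nat ltac:(lia)).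
  - exact (H 2%nat ltac:(lia)).
Qed.

Lemma ckvec (r : nat) c t : (3 <= r)%nat -> Ck_vec r c t ->
  vex c t /\ vex (vderiv c) t /\ vex (vderiv (vderiv c)) t.
Proof.
  intros Hr [Hx [Hy Hz]].
  destruct (ck3 r _ t Hr Hx) as [X1 [X2 X3]].
  destruct (ck3 r _ t Hr Hy) as [Y1 [Y2 Y3]].
  destruct (ck3 r _ t Hr Hz) as [Z1 [Z2 Z3]].
  split; [|split]; split; [|split| |split| |split]; assumption.
Qed.

Lemma regular_of (a b : Rbar) (r : nat) (s e : R -> vec3) (f g : R -> R) :
  (3 <= r)%nat ->
  (forall u, in_I a b u -> Ck_vec r s u /\ Ck_vec r e u) ->
  (forall u, in_I a b u -> Ck_at 2 f u /\ Ck_at 2 g u) ->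
  (forall u, in_I a b u ->
     dot (e u) (e u) = 1 /\ dot (nvec e u) (nvec e u) = 1 /\
     dot (vderiv s u) (vderiv e u) = 0) ->
  (forall u, in_I a b u -> delta s e u <> 0) ->
  regular a b s e f g.
Proof.
  intros Hr Hse Hfg Hn Hd t Ht.
  destruct (Hse t Ht) as [Hs He].
  destruct (ckvec r s t Hr Hs) as [S1 [S2 S3]].
  destruct (ckvec r e t Hr He) as [E1 [E2 E3]].
  destruct (Hfg t Ht) as [Hf Hg].
  destruct (ck2 f t Hf) as [F1 F2].
  destruct (ck2 g t Hg) as [G1 G2].
  destruct (Hn t Ht) as [N1 [N2 _]].
  exact (conj S1 (conj S2 (conj S3 (conj E1 (conj E2 (conj E3 (conj F1 (conj F2 (conj G1 (conj G2 (conj N1 (conj N2 (Hd t Ht))))))))))))).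
Qed.

Lemma loc_I a b u : in_I a b u -> locally u (in_I a b).
Proof.
  intros [H1 H2]. apply filter_and.
  - exact (open_Rbar_gt a u H1).
  - exact (open_Rbar_lt b u H2).
Qed.

Lemma deriv_loc_const (h : R -> R) u c l : locally u (fun t => h t = c) -> is_derive h u l -> l = 0.
Proof.
  intros Hl Hd.
  assert (H0 : is_derive h u 0).
  { apply (is_derive_ext_loc (fun _ => c)).
    - apply (filter_imp _ _ (fun t H => eq_sym H) Hl).
    - apply (is_derive_const (V := R_NormedModule)). }
  apply (is_derive_unique h u l) in Hd. apply (is_derive_unique h u 0) in H0. congruence.
Qed.

Lemma dot_comm p q : dot p q = dot q p.
Proof. unfold dot; ring. Qed.

Lemma orth_facts a b s e f g u : regular a b s e f g -> in_I a b u ->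
  dot (e u) (nvec e u) = 0 /\ dot (nvec e u) (vderiv (vderiv e) u) = 0.
Proof.
  intros Hreg Hu.
  destruct (Hreg u Hu) as (S1 & S2 & S3 & E1 & E2 & E3 & _).
  split.
  - assert (H := isd_dot e e u _ _ (vex_vis e u E1) (vex_vis e u E1)).
    apply deriv_loc_const with (c := 1) in H.
    + unfold nvec. rewrite (dot_comm (vderiv e u)) in H. lra.
    + apply (filter_imp (in_I a b)); [|apply loc_I; auto].
      intros t Ht. apply (Hreg t Ht).
  - assert (H := isd_dot _ _ u _ _ (vex_vis _ u E2) (vex_vis _ u E2)).
    apply deriv_loc_const with (c := 1) in H.
    + unfold nvec. rewrite (dot_comm (vderiv (vderiv e) u)) in H. lra.
    + apply (filter_imp (in_I a b)); [|apply loc_I; auto].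
      intros t Ht. apply (Hreg t Ht).
Qed.
Ltac vring := apply vec_eq; cbv [det3 dot vadd vscal vopp vzero cross mkv vx vy vz fst snd]; ring.

Lemma vex_add c d u : vex c u -> vex d u -> vex (fun t => vadd (c t) (d t)) u.
Proof. intros Hc Hd. eapply vis_vex. apply vis_add; apply vex_vis; assumption. Qed.

Definition dDelta (s e : R -> vec3) t :=
  dot (vderiv (vderiv s) t) (cross (e t) (nvec e t)) +
  dot (vderiv s t) (vadd (cross (nvec e t) (nvec e t)) (cross (e t) (vderiv (vderiv e) t))).

Lemma delta_isd a b s e f g t : regular a b s e f g -> in_I a b t ->
  is_derive (delta s e) t (dDelta s e t).
Proof.
  intros Hreg Ht. destruct (Hreg t Ht) as (S1 & S2 & S3 & E1 & E2 & E3 & _).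
  exact (isd_dot _ _ t _ _ (vex_vis _ t S2) (vis_cross _ _ t _ _ (vex_vis e t E1) (vex_vis _ t E2))).
Qed.

Lemma delta_ex2 a b s e f g u : regular a b s e f g -> in_I a b u ->
  ex_derive (delta s e) u /\ ex_derive (Derive (delta s e)) u.
Proof.
  intros Hreg Hu. split.
  - eexists. eapply delta_isd; eauto.
  - apply (ex_derive_ext_loc (dDelta s e)).
    + apply (filter_imp (in_I a b)); [|apply loc_I; auto].
      intros t Ht. symmetry. apply is_derive_unique. eapply delta_isd; eauto.
    + destruct (Hreg u Hu) as (S1 & S2 & S3 & E1 & E2 & E3 & _).
      unfold dDelta. apply (ex_derive_plus (fun t => dot (vderiv (vderiv s) t) (cross (e t) (nvec e t)))
        (fun t => dot (vderiv s t) (vadd (cross (nvec e t) (nvec e t)) (cross (e t) (vderiv (vderiv e) t))))).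
      * apply exd_dot; [assumption|]. apply vex_cross; assumption.
      * apply exd_dot; [assumption|]. apply vex_add; apply vex_cross; assumption.
Qed.

Lemma kappa_ex a b s e f g u : regular a b s e f g -> in_I a b u -> ex_derive (kappa e) u.
Proof.
  intros Hreg Hu. destruct (Hreg u Hu) as (S1 & S2 & S3 & E1 & E2 & E3 & _).
  apply exd_dot; [assumption|]. apply vex_cross; assumption.
Qed.

Definition Acoef (s e : R -> vec3) (f g : R -> R) (v t : R) : R :=
  ((kappa e t * f t - delta s e t * Derive g t) * v + Derive (delta s e) t * f t
   - delta s e t * Derive f t - delta s e t ^ 2 * kappa e t * g t) / delta s e t ^ 2.

Definition hfun (s e : R -> vec3) (f g : R -> R) (t : R) : R :=
  (kappa e t * f t - delta s e t * Derive g t) / delta s e t ^ 2.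

Lemma Acoef_ex a b s e f g v u : regular a b s e f g -> in_I a b u -> ex_derive (Acoef s e f g v) u.
Proof.
  intros Hreg Hu.
  destruct (delta_ex2 a b s e f g u Hreg Hu) as [D1 D2].
  assert (K := kappa_ex a b s e f g u Hreg Hu).
  destruct (Hreg u Hu) as (S1 & S2 & S3 & E1 & E2 & E3 & F1 & F2 & G1 & G2 & _ & _ & Hd).
  unfold Acoef. auto_derive. repeat split; try assumption.
  intro H. apply Hd. nra.
Qed.
Definition Lstd (E N M : vec3) (a1 A F1 F g1 g : R) : vec3 :=
  vadd (vadd (vscal a1 E) (vscal A N))
    (vadd (vadd (vscal F1 N) (vscal F M))
       (vadd (vscal (- g1) (cross E N)) (vscal (- g) (vadd (cross N N) (cross E M))))).

Lemma alg_z E N M a1 A F1 F g1 g :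
  dot (Lstd E N M a1 A F1 F g1 g) (cross E N) =
  F * det3 E N M - g1 * (dot E E * dot N N - dot E N ^ 2) - g * (dot E E * dot N M - dot E N * dot E M).
Proof.
  destruct E as [[e1 e2] e3], N as [[n1 n2] n3], M as [[m1 m2] m3].
  unfold Lstd, det3, dot, vadd, vscal, cross, mkv, vx, vy, vz; simpl; ring.
Qed.

Lemma alg_n E N M a1 A F1 F g1 g :
  dot (Lstd E N M a1 A F1 F g1 g) N =
  a1 * dot E N + (A + F1) * dot N N + F * dot N M + g * det3 E N M.
Proof.
  destruct E as [[e1 e2] e3], N as [[n1 n2] n3], M as [[m1 m2] m3].
  unfold Lstd, det3, dot, vadd, vscal, cross, mkv, vx, vy, vz; simpl; ring.
Qed.

Lemma P_vis a b s e f g v u : regular a b s e f g -> in_I a b u ->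
  vis_derive (fun t => rightnorm s e f g t v) u
    (Lstd (e u) (nvec e u) (vderiv (vderiv e) u) (Derive (Acoef s e f g v) u) (Acoef s e f g v u)
       ((Derive f u * delta s e u - f u * Derive (delta s e) u) / delta s e u ^ 2)
       (f u / delta s e u) (Derive g u) (g u)).
Proof.
  intros Hreg Hu.
  destruct (delta_ex2 a b s e f g u Hreg Hu) as [D1 D2].
  assert (HA := Acoef_ex a b s e f g v u Hreg Hu).
  destruct (Hreg u Hu) as (S1 & S2 & S3 & E1 & E2 & E3 & F1 & F2 & G1 & G2 & _ & _ & Hd).
  change (fun t => rightnorm s e f g t v) with
    (fun t => vadd (vscal (Acoef s e f g v t) (e t))
        (vadd (vscal (f t / delta s e t) (nvec e t)) (vscal (- g t) (cross (e t) (nvec e t))))).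
  unfold Lstd. apply vis_add; [|apply vis_add].
  - apply (vis_scal (Acoef s e f g v) e); [apply Derive_correct; exact HA| apply vex_vis; exact E1].
  - apply (vis_scal (fun t => f t / delta s e t) (nvec e)); [|apply vex_vis; exact E2].
    destruct F1 as [f1 Hf1]. destruct D1 as [d1 Hd1].
    eapply isd_eq.
    + apply (is_derive_div f (delta s e) u f1 d1); auto.
    + rewrite (is_derive_unique _ _ _ Hf1), (is_derive_unique _ _ _ Hd1). reflexivity.
  - apply (vis_scal (fun t => - g t) (fun t => cross (e t) (nvec e t))).
    + destruct G1 as [g1 Hg1]. eapply isd_eq.
      * apply (is_derive_opp (V := R_NormedModule) g u g1); auto.
      * rewrite (is_derive_unique _ _ _ Hg1). reflexivity.
    + apply vis_cross; apply vex_vis; assumption.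
Qed.
Lemma key a b s e f g u v : regular a b s e f g -> in_I a b u ->
  dot (pu (rightnorm s e f g) u v) (zvec e u) = hfun s e f g u * delta s e u /\
  dot (pu (rightnorm s e f g) u v) (nvec e u) = hfun s e f g u * v /\
  pv (rightnorm s e f g) u v = vscal (hfun s e f g u) (e u) /\
  pu (surf s e) u v = vadd (vderiv s u) (vscal v (nvec e u)) /\
  pv (surf s e) u v = e u.
Proof.
  intros Hreg Hu.
  assert (HP := vderiv_eq _ _ _ (P_vis a b s e f g v u Hreg Hu)).
  destruct (orth_facts a b s e f g u Hreg Hu) as [O1 O2].
  destruct (Hreg u Hu) as (S1 & S2 & S3 & E1 & E2 & E3 & F1 & F2 & G1 & G2 & Hee & Hnn & Hd).
  split; [|split; [|split; [|split]]].
  - unfold pu. rewrite HP. unfold zvec. rewrite alg_z, Hee, Hnn, O1, O2.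
    change (det3 (e u) (nvec e u) (vderiv (vderiv e) u)) with (kappa e u).
    unfold hfun. field. exact Hd.
  - unfold pu. rewrite HP. rewrite alg_n, O1, O2, Hnn.
    change (det3 (e u) (nvec e u) (vderiv (vderiv e) u)) with (kappa e u).
    unfold hfun, Acoef. field. exact Hd.
  - unfold pv.
    rewrite (vderiv_eq (fun t => rightnorm s e f g u t) v
      (vadd (vadd (vscal (hfun s e f g u) (e u)) (vscal (Acoef s e f g v u) vzero)) vzero)).
    + vring.
    + change (fun t => rightnorm s e f g u t) with
        (fun t => vadd (vscal (Acoef s e f g t u) (e u))
          (vadd (vscal (f u / delta s e u) (nvec e u)) (vscal (- g u) (zvec e u)))).
      apply vis_add; [|apply vis_const].
      apply (vis_scal (fun t => Acoef s e f g t u) (fun _ => e u)); [|apply vis_const].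
      unfold Acoef, hfun. auto_derive; [exact I|]. field. exact Hd.
  - unfold pu, surf.
    rewrite (vderiv_eq (fun t => vadd (s t) (vscal v (e t))) u
      (vadd (vderiv s u) (vadd (vscal 0 (e u)) (vscal v (vderiv e u))))).
    + unfold nvec; vring.
    + apply vis_add; [apply vex_vis; exact S1|].
      apply (vis_scal (fun _ => v) e); [apply (is_derive_const (V := R_NormedModule))|apply vex_vis; exact E1].
  - unfold pv, surf.
    rewrite (vderiv_eq (fun t => vadd (s u) (vscal t (e u))) v
      (vadd vzero (vadd (vscal 1 (e u)) (vscal v vzero)))).
    + vring.
    + apply vis_add; [apply vis_const|].
      apply (vis_scal (fun t => t) (fun _ => e u)); [apply (is_derive_id (K := R_AbsRing))|apply vis_const].
Qed.
Ltac vdestr := repeat match goal with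
  | p : vec3 |- _ => let a := fresh "a" in let b := fresh "b" in let c := fresh "c" in
                     destruct p as [[a b] c] end.
Ltac vunf := cbv [det3 dot vadd vscal vopp vzero cross mkv vx vy vz fst snd] in *.

Lemma expand E N P : dot E E = 1 -> dot N N = 1 -> dot E N = 0 -> dot P N = 0 ->
  dot P (cross E N) = 0 -> P = vscal (dot P E) E.
Proof.
  intros H1 H2 H3 H4 H5.
  assert (Hid : vscal (dot E E * dot N N - dot E N ^ 2) P =
    vadd (vscal (dot P E * dot N N - dot P N * dot E N) E)
      (vadd (vscal (dot P N * dot E E - dot P E * dot E N) N) (vscal (dot P (cross E N)) (cross E N)))).
  { clear H1 H2 H3 H4 H5. vdestr. vring. }
  rewrite H1, H2, H3, H4, H5 in Hid.
  transitivity (vscal (1 * 1 - 0 ^ 2) P); [vring|]. rewrite Hid. vring.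
Qed.

Lemma alg_eq2 E N S h v B21 B22 : dot E E = 1 -> dot S (cross E N) <> 0 ->
  vscal h E = vopp (vadd (vscal B21 (vadd S (vscal v N))) (vscal B22 E)) -> B21 = 0 /\ B22 = - h.
Proof.
  intros H1 H2 H.
  assert (Hz := f_equal (fun w => dot w (cross E N)) H).
  assert (He := f_equal (fun w => dot w E) H). simpl in Hz, He.
  assert (A1 : dot (vscal h E) (cross E N) = 0) by (clear -E; vdestr; vunf; ring).
  assert (A2 : dot (vopp (vadd (vscal B21 (vadd S (vscal v N))) (vscal B22 E))) (cross E N)
     = - (B21 * dot S (cross E N))) by (clear; vdestr; vunf; ring).
  assert (A3 : dot (vscal h E) E = h * dot E E) by (clear; vdestr; vunf; ring).
  assert (A4 : dot (vopp (vadd (vscal B21 (vadd S (vscal v N))) (vscal B22 E))) E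
     = - (B21 * dot (vadd S (vscal v N)) E + B22 * dot E E)) by (clear; vdestr; vunf; ring).
  rewrite A1, A2 in Hz. rewrite A3, A4, H1 in He.
  assert (B21 = 0).
  { destruct (Rmult_integral B21 (dot S (cross E N))); [lra|auto|contradiction]. }
  subst. split; [reflexivity|]. lra.
Qed.

Lemma alg_eq1 E N S P h v B11 B12 : dot P (cross E N) = h * dot S (cross E N) -> dot S (cross E N) <> 0 ->
  P = vopp (vadd (vscal B11 (vadd S (vscal v N))) (vscal B12 E)) -> B11 = - h.
Proof.
  intros H1 H2 H. rewrite H in H1.
  assert (A2 : dot (vopp (vadd (vscal B11 (vadd S (vscal v N))) (vscal B12 E))) (cross E N)
     = - (B11 * dot S (cross E N))) by (clear; vdestr; vunf; ring).
  rewrite A2 in H1.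
  apply (Rmult_eq_reg_r (dot S (cross E N))); [lra|assumption].
Qed.

Lemma alg_ft P E N h : dot (cross P (vscal h E)) N = h * dot P (cross E N).
Proof. vdestr; vunf; ring. Qed.

Lemma cont_nz (h : R -> R) u : continuous h u -> h u <> 0 -> locally u (fun t => h t <> 0).
Proof.
  intros Hc Hn.
  assert (H : locally (h u) (fun y => y <> 0)).
  { exists (mkposreal (Rabs (h u)) (Rabs_pos_lt _ Hn)). intros y Hy Hy0. subst.
    unfold ball in Hy; simpl in Hy; unfold AbsRing_ball, abs, minus, plus, opp in Hy; simpl in Hy.
    rewrite Rplus_0_l, Rabs_Ropp in Hy. lra. }
  exact (Hc _ H).
Qed.

Lemma hfun_ex a b s e f g u : regular a b s e f g -> in_I a b u -> ex_derive (hfun s e f g) u.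
Proof.
  intros Hreg Hu.
  destruct (delta_ex2 a b s e f g u Hreg Hu) as [D1 D2].
  assert (K := kappa_ex a b s e f g u Hreg Hu).
  destruct (Hreg u Hu) as (S1 & S2 & S3 & E1 & E2 & E3 & F1 & F2 & G1 & G2 & _ & _ & Hd).
  unfold hfun. auto_derive. repeat split; try assumption.
  intro H. apply Hd. nra.
Qed.

Lemma hzero_of_dom a b s e f g : regular a b s e f g ->
  (forall u, in_I a b u -> (f u <> 0 \/ g u <> 0) -> hfun s e f g u = 0) ->
  forall u, in_I a b u -> hfun s e f g u = 0.
Proof.
  intros Hreg Hdom u Hu.
  destruct (Req_dec (hfun s e f g u) 0) as [E|Hn]; [exact E|exfalso].
  assert (Hc := ex_derive_continuous _ _ (hfun_ex a b s e f g u Hreg Hu)).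
  assert (Hl := filter_and _ _ (cont_nz _ _ Hc Hn) (loc_I a b u Hu)).
  assert (Hfg : locally u (fun t => f t = 0 /\ g t = 0)).
  { refine (filter_imp _ _ _ Hl). intros t [Ht1 Ht2].
    destruct (Req_dec (f t) 0); destruct (Req_dec (g t) 0); auto;
    exfalso; apply Ht1; apply Hdom; auto. }
  destruct (Hreg u Hu) as (S1 & S2 & S3 & E1 & E2 & E3 & F1 & F2 & G1 & G2 & _ & _ & Hd).
  assert (Hg0 : Derive g u = 0).
  { apply (deriv_loc_const g u 0).
    - apply (filter_imp _ _ (fun t H => proj2 H) Hfg).
    - apply Derive_correct; exact G1. }
  destruct (locally_singleton _ _ Hfg) as [Hf0 _].
  apply Hn. unfold hfun. rewrite Hg0, Hf0. field. exact Hd.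
Qed.
Lemma isd_const (c x : R) : is_derive (fun _ : R => c) x 0.
Proof. apply (is_derive_const (V := R_NormedModule)). Qed.

Lemma min_at a b s e f g u v B11 B12 B21 B22 : regular a b s e f g -> in_I a b u ->
  shape_op (surf s e) (rightnorm s e f g) u v B11 B12 B21 B22 -> (B11 + B22) / 2 = 0 ->
  hfun s e f g u = 0.
Proof.
  intros Hreg Hu [Hs1 Hs2] HB.
  destruct (key a b s e f g u v Hreg Hu) as (K1 & K2 & K3 & K4 & K5).
  destruct (Hreg u Hu) as (S1 & S2 & S3 & E1 & E2 & E3 & F1 & F2 & G1 & G2 & Hee & Hnn & Hd).
  rewrite K3, K4, K5 in Hs2. rewrite K4, K5 in Hs1.
  destruct (alg_eq2 (e u) (nvec e u) (vderiv s u) _ _ _ _ Hee Hd Hs2) as [H21 H22].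
  assert (H11 := alg_eq1 (e u) (nvec e u) (vderiv s u) _ _ _ _ _ K1 Hd Hs1).
  lra.
Qed.

Lemma min_to_h a b s e f g : regular a b s e f g -> relatively_minimal a b s e f g ->
  forall u, in_I a b u -> hfun s e f g u = 0.
Proof.
  intros Hreg Hmin. apply hzero_of_dom; [exact Hreg|].
  intros u Hu Hfg.
  assert (Hv : exists v, f u + g u * v <> 0).
  { destruct (Req_dec (g u) 0) as [Hg|Hg].
    - exists 0. rewrite Hg. destruct Hfg; [lra|contradiction].
    - exists ((1 - f u) / g u). replace (f u + g u * ((1 - f u) / g u)) with 1 by (field; exact Hg). lra. }
  destruct Hv as [v Hv].
  destruct (Hmin u v (conj Hu Hv)) as (B11 & B12 & B21 & B22 & Hs & HB).
  eapply min_at; eauto.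
Qed.

Lemma ft_to_h a b s e f g : regular a b s e f g -> first_type a b s e f g ->
  forall u, in_I a b u -> hfun s e f g u = 0.
Proof.
  intros Hreg Hft. apply hzero_of_dom; [exact Hreg|].
  intros u Hu Hfg.
  assert (Hv : exists v, f u + g u * v <> 0).
  { destruct (Req_dec (g u) 0) as [Hg|Hg].
    - exists 0. rewrite Hg. destruct Hfg; [lra|contradiction].
    - exists ((1 - f u) / g u). replace (f u + g u * ((1 - f u) / g u)) with 1 by (field; exact Hg). lra. }
  destruct Hv as [v Hv].
  assert (H := Hft u v (conj Hu Hv)).
  destruct (key a b s e f g u v Hreg Hu) as (K1 & K2 & K3 & K4 & K5).
  destruct (Hreg u Hu) as (S1 & S2 & S3 & E1 & E2 & E3 & F1 & F2 & G1 & G2 & Hee & Hnn & Hd).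
  rewrite K3 in H.
  assert (H' := f_equal (fun w => dot w (nvec e u)) H). simpl in H'.
  rewrite alg_ft in H'.
  change (dot (pu (rightnorm s e f g) u v) (cross (e u) (nvec e u))) with
    (dot (pu (rightnorm s e f g) u v) (zvec e u)) in H'.
  rewrite K1 in H'.
  assert (Z : dot vzero (nvec e u) = 0) by (vunf; ring).
  rewrite Z in H'.
  destruct (Rmult_integral _ _ H') as [Hh|Hh]; [exact Hh|].
  destruct (Rmult_integral _ _ Hh) as [Hh'|Hh']; [exact Hh'|contradiction].
Qed.

Lemma h_to_min a b s e f g : regular a b s e f g ->
  (forall u, in_I a b u -> hfun s e f g u = 0) -> relatively_minimal a b s e f g.
Proof.
  intros Hreg H0 u v [Hu Hne].
  destruct (key a b s e f g u v Hreg Hu) as (K1 & K2 & K3 & K4 & K5).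
  destruct (orth_facts a b s e f g u Hreg Hu) as [O1 O2].
  destruct (Hreg u Hu) as (S1 & S2 & S3 & E1 & E2 & E3 & F1 & F2 & G1 & G2 & Hee & Hnn & Hd).
  rewrite (H0 u Hu) in K1, K2, K3.
  exists 0, (- dot (pu (rightnorm s e f g) u v) (e u)), 0, 0.
  split; [split|lra].
  - rewrite K4, K5.
    transitivity (vscal (dot (pu (rightnorm s e f g) u v) (e u)) (e u)).
    + apply (expand (e u) (nvec e u)); auto.
      * rewrite K2; ring.
      * change (cross (e u) (nvec e u)) with (zvec e u). rewrite K1; ring.
    + vring.
  - rewrite K3, K4, K5. vring.
Qed.

Lemma h_to_ft a b s e f g : regular a b s e f g ->
  (forall u, in_I a b u -> hfun s e f g u = 0) -> first_type a b s e f g.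
Proof.
  intros Hreg H0 u v [Hu Hne].
  destruct (key a b s e f g u v Hreg Hu) as (K1 & K2 & K3 & K4 & K5).
  rewrite K3, (H0 u Hu).
  generalize (pu (rightnorm s e f g) u v). intro P. vring.
Qed.

Lemma h_iff_c a b s e f g : regular a b s e f g ->
  ((forall u, in_I a b u -> hfun s e f g u = 0) <->
   exists (G : R -> R) (c : R),
       (forall u, in_I a b u -> is_derive G u (kappa e u * f u / delta s e u)) /\
       (forall u, in_I a b u -> g u = G u + c)).
Proof.
  intros Hreg. split.
  - intros H0. exists g, 0. split.
    + intros u Hu.
      destruct (Hreg u Hu) as (S1 & S2 & S3 & E1 & E2 & E3 & F1 & F2 & G1 & G2 & Hee & Hnn & Hd).
      eapply isd_eq; [apply Derive_correct; exact G1|].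
      assert (Hx : kappa e u * f u - delta s e u * Derive g u = hfun s e f g u * delta s e u ^ 2)
        by (unfold hfun; field; exact Hd).
      rewrite (H0 u Hu) in Hx.
      replace (kappa e u * f u) with (delta s e u * Derive g u) by lra.
      field. exact Hd.
    + intros u Hu. ring.
  - intros [G [c [HG Hg]]] u Hu.
    destruct (Hreg u Hu) as (S1 & S2 & S3 & E1 & E2 & E3 & F1 & F2 & G1 & G2 & Hee & Hnn & Hd).
    assert (Hd' : is_derive g u (kappa e u * f u / delta s e u)).
    { apply (is_derive_ext_loc (fun t => G t + c)).
      - refine (filter_imp _ _ _ (loc_I a b u Hu)). intros t Ht. symmetry. apply Hg; exact Ht.
      - eapply isd_eq; [apply (isd_plus G (fun _ => c)); [apply HG; exact Hu|apply isd_const]|ring]. }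
    unfold hfun. rewrite (is_derive_unique _ _ _ Hd'). field. exact Hd.
Qed.
Theorem proposition3 (a b : Rbar) (r : nat) (s e : R -> vec3) (f g : R -> R) :
  (3 <= r)%nat ->
  (forall u, in_I a b u -> Ck_vec r s u /\ Ck_vec r e u) ->
  (forall u, in_I a b u -> Ck_at 2 f u /\ Ck_at 2 g u) ->
  (forall u, in_I a b u ->
     dot (e u) (e u) = 1 /\ dot (nvec e u) (nvec e u) = 1 /\
     dot (vderiv s u) (vderiv e u) = 0) ->
  (forall u, in_I a b u -> delta s e u <> 0) ->
  (exists u, in_I a b u /\ f u <> 0) ->
  (exists u, in_I a b u /\ g u <> 0) ->
  (first_type a b s e f g <-> relatively_minimal a b s e f g) /\
  (relatively_minimal a b s e f g <->
     exists (G : R -> R) (c : R),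
       (forall u, in_I a b u -> is_derive G u (kappa e u * f u / delta s e u)) /\
       (forall u, in_I a b u -> g u = G u + c)).
Proof.
  intros Hr Hse Hfg Hn Hd _ _.
  assert (Hreg := regular_of a b r s e f g Hr Hse Hfg Hn Hd).
  assert (HC := h_iff_c a b s e f g Hreg).
  split; split; intro H.
  - apply h_to_min; auto. apply ft_to_h; auto.
  - apply h_to_ft; auto. apply min_to_h; auto.
  - apply HC. apply min_to_h; auto.
  - apply h_to_min; auto. apply HC; auto.
Qed.
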